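(* Let $(\lambda_i)_{i\ge1}$ and $(\mu_i)_{i\ge1}$ be elements of a commutative ring. Let $k\ge0$ and $0\le\delta\le k$ with $k-\delta$ even, and put $j=(k-\delta)/2$ and $M=(k+\delta)/2$. Then $$\sum_{P\in\mathcal{D}(k,0,\delta)}\mathrm{wt}(P)=\Big(\prod_{i=1}^{\delta}\lambda_i\Big)\sum_{\substack{m_1\le m_2\le\cdots\le m_j\le M\\ m_i\ge i\ (1\le i\le j)}}\ \prod_{i=1}^{j}\lambda_{m_i-i+1}\,\mu_{m_i-i+1},$$ where the sum on the right is over integer tuples $(m_1,\dots,m_j)$ and equals $1$ when $j=0$. Equivalently, the right-hand side is the nested sum $$\prod_{i=1}^{\delta}\lambda_i\sum_{m_j=j}^{M}\lambda_{m_j-j+1}\mu_{m_j-j+1}\Big[\cdots\Big[\sum_{m_2=2}^{m_3}\lambda_{m_2-1}\mu_{m_2-1}\Big[\sum_{m_1=1}^{m_2}\lambda_{m_1}\mu_{m_1}\Big]\Big]\cdots\Big].$$ In particular for $\delta=0$ (so $k$ even, $j=M=k/2$) the sum of weights of all paths in $\mathcal{D}(k,0,0)$ is the nested sum with all upper bounds $k/2$ and no prefactor.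
   Context: $\mathcal{D}(k,\delta_1,\delta_2)$ is the set of lattice paths of $k$ steps, each step $U=(1,1)$ or $D=(1,-1)$, from $(0,\delta_1)$ to $(k,\delta_2)$, never going below the $x$-axis. The weight $\mathrm{wt}(P)$ of a path is the product over its steps of $\lambda_i$ for each up step from height $i-1$ to height $i$ and $\mu_i$ for each down step from height $i$ to height $i-1$. *)

(* Defs.v *)
From HB Require Import structures.
From mathcomp Require Import all_boot all_order all_algebra.
Set Implicit Arguments. Unset Strict Implicit. Unset Printing Implicit Defensive.
Import Order.TTheory GRing.Theory Num.Theory.

(* A lattice path is a sequence of steps: true = U = (1,1), false = D = (1,-1). *)

Fixpoint valid_path (h : nat) (s : seq bool) : bool :=
  match s with
  | [::] => true
  | true :: s' => valid_path h.+1 s'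
  | false :: s' => (0 < h) && valid_path h.-1 s'
  end.

(* final height of a path started at height h (only meaningful for valid paths) *)
Fixpoint end_height (h : nat) (s : seq bool) : nat :=
  match s with
  | [::] => h
  | true :: s' => end_height h.+1 s'
  | false :: s' => end_height h.-1 s'
  end.

Local Open Scope ring_scope.

Fixpoint path_wt (R : comPzRingType) (lam mu : nat -> R) (h : nat) (s : seq bool) : R :=
  match s with
  | [::] => 1
  | true :: s' => lam h.+1 * path_wt lam mu h.+1 s'
  | false :: s' => mu h * path_wt lam mu h.-1 s'
  end.

Definition in_D (k d1 d2 : nat) (P : k.-tuple bool) : bool :=
  valid_path d1 P && (end_height d1 P == d2).

(* Main.v *)
Require Import Defs.
From HB Require Import structures.
From mathcomp Require Import all_boot all_order all_algebra zify ring.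
Import Order.TTheory GRing.Theory Num.Theory.
Set Implicit Arguments. Unset Strict Implicit.
Local Open Scope ring_scope.

Lemma sum_tuple_cons (R : nmodType) (T : finType) n (F : n.+1.-tuple T -> R) :
  \sum_(t : n.+1.-tuple T) F t = \sum_(x : T) \sum_(t : n.-tuple T) F [tuple of x :: t].
Proof.
rewrite pair_big /=.
rewrite (reindex (fun p : T * n.-tuple T => [tuple of p.1 :: p.2])) //=.
exists (fun t : n.+1.-tuple T => (thead t, [tuple of behead t])).
  by move=> [x t] _ /=; congr pair; apply: val_inj.
by move=> t _; rewrite [RHS]tuple_eta; apply: val_inj.
Qed.

Lemma sum_tuple_rcons (R : nmodType) (T : finType) n (F : n.+1.-tuple T -> R) :
  \sum_(t : n.+1.-tuple T) F t = \sum_(x : T) \sum_(t : n.-tuple T) F [tuple of rcons t x].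
Proof.
rewrite (reindex_inj (h := fun t : n.+1.-tuple T => [tuple of rev t])); last first.
  by move=> t1 t2 /(congr1 val) /= /(congr1 rev); rewrite !revK => /val_inj.
rewrite sum_tuple_cons; apply: eq_bigr => x _.
rewrite (reindex_inj (h := fun t : n.-tuple T => [tuple of rev t])); last first.
  by move=> t1 t2 /(congr1 val) /= /(congr1 rev); rewrite !revK => /val_inj.
apply: eq_bigr => t _; congr F; apply: val_inj => /=.
by rewrite rev_cons revK.
Qed.


Lemma valid_rcons h s b : valid_path h (rcons s b) =
  valid_path h s && (b || (0 < end_height h s)%N).
Proof. by elim: s h => [|[] s IH] h /=; rewrite ?IH ?andbT ?andbA // orbT. Qed.

Lemma end_rcons h s b : end_height h (rcons s b) =
  if b then (end_height h s).+1 else (end_height h s).-1.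
Proof. by elim: s h => [|[] s IH] h /=. Qed.

Lemma wt_rcons (R : comPzRingType) (lam mu : nat -> R) h s b :
  path_wt lam mu h (rcons s b) = path_wt lam mu h s *
    (if b then lam (end_height h s).+1 else mu (end_height h s)).
Proof. by elim: s h => [|[] s IH] h /=; rewrite ?mul1r ?mulr1 ?IH ?mulrA. Qed.

Definition Psum (R : comPzRingType) (lam mu : nat -> R) k d :=
  \sum_(P : k.-tuple bool | in_D 0 d P) path_wt lam mu 0 P.

Lemma Psum0 (R : comPzRingType) (lam mu : nat -> R) d :
  Psum lam mu 0 d = if d == 0%N then 1 else 0.
Proof.
rewrite /Psum (eq_bigr (fun _ => 1)); last by move=> t _; rewrite tuple0.
rewrite (eq_bigl (fun _ => d == 0%N)); last by move=> t; rewrite tuple0 /in_D /= eq_sym.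
case: eqP => _; last by rewrite big_pred0.
by rewrite (big_pred1 [tuple]) // => t; rewrite /= (tuple0 t); apply/esym/eqP.
Qed.

Lemma in_D_rcons k d (b : bool) (t : k.-tuple bool) :
  in_D 0 d [tuple of rcons t b] =
  [&& valid_path 0 t, b || (0 < end_height 0 t)%N &
      (if b then (end_height 0 t).+1 else (end_height 0 t).-1) == d].
Proof. by rewrite /in_D /= valid_rcons end_rcons andbA. Qed.

Lemma PsumS (R : comPzRingType) (lam mu : nat -> R) k d :
  Psum lam mu k.+1 d =
  (if d is d'.+1 then lam d * Psum lam mu k d' else 0) + mu d.+1 * Psum lam mu k d.+1.
Proof.
rewrite /Psum big_mkcond sum_tuple_rcons /= big_bool /=.
have -> : \sum_(t : k.-tuple bool) (if in_D 0 d [tuple of rcons t true]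
      then path_wt lam mu 0 (rcons t true) else 0) =
  (if d is d'.+1 then lam d * \sum_(P : k.-tuple bool | in_D 0 d' P) path_wt lam mu 0 P else 0).
  case: d => [|d].
    by rewrite big1 // => t _; rewrite in_D_rcons; case: valid_path.
  rewrite mulr_sumr [RHS]big_mkcond; apply: eq_bigr => t _.
  rewrite in_D_rcons wt_rcons eqSS /in_D orTb.
  case: (valid_path 0 t) => //.
  by case: eqP => [->|]; rewrite /= 1?mulrC.
 congr (_ + _).
rewrite mulr_sumr [RHS]big_mkcond; apply: eq_bigr => t _.
rewrite in_D_rcons wt_rcons /in_D orFb.
case: (valid_path 0 t) => //.
case: (end_height 0 t) => [|e] //.
by rewrite /= eqSS; case: eqP => [->|]; rewrite /= 1?mulrC.
Qed.


Section Main.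
Variables (R : comPzRingType) (lam mu : nat -> R).

Fixpoint Tn (n b : nat) : R :=
  match n with
  | 0 => 1
  | n'.+1 => \sum_(n'.+1 <= m < b.+1) lam (m - n') * mu (m - n') * Tn n' m
  end.

Lemma Tn_rec n b : (n <= b)%N ->
  Tn n.+1 b.+1 = Tn n.+1 b + lam (b.+1 - n) * mu (b.+1 - n) * Tn n b.+1.
Proof. by move=> nb; rewrite /= big_nat_recr //=. Qed.

Lemma Tn_empty n b : (b < n.+1)%N -> Tn n.+1 b = 0.
Proof. by move=> bn; rewrite /= big_geq. Qed.

Definition Lam d := \prod_(1 <= i < d.+1) lam i.

Lemma LamS d : Lam d.+1 = Lam d * lam d.+1.
Proof. by rewrite /Lam big_nat_recr. Qed.

Lemma Lam0 : Lam 0 = 1.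
Proof. by rewrite /Lam big_geq. Qed.

Definition C k d := if (d <= k)%N && ~~ odd (k - d) then
  Lam d * Tn ((k - d)./2) ((k + d)./2) else 0.

Lemma Psum_C k d : Psum lam mu k d = C k d.
Proof.
elim: k d => [|k IH] d.
  rewrite Psum0 /C; case: d => [|d] //=.
  by rewrite Lam0 mulr1.
rewrite PsumS; case: d => [|d].
  rewrite (IH 1%N) /C.
  have [ok|ek] := boolP (odd k).
    set J := ((k - 1)./2)%N.
    have -> : ((0 <= k.+1)%N && ~~ odd (k.+1 - 0)) = true by lia.
    have -> : ((1 <= k)%N && ~~ odd (k - 1)) = true by lia.
    have -> : ((k.+1 - 0)./2 = J.+1)%N by lia.
    have -> : ((k.+1 + 0)./2 = J.+1)%N by lia.
    have -> : ((k + 1)./2 = J.+1)%N by lia.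
    rewrite Tn_rec // Tn_empty // add0r subSnn Lam0 LamS Lam0.
    ring.
  have -> : ((0 <= k.+1)%N && ~~ odd (k.+1 - 0)) = false by apply/negbTE; lia.
  have -> : ((1 <= k)%N && ~~ odd (k - 1)) = false by apply/negbTE; lia.
  by rewrite mulr0 addr0.
rewrite (IH d) (IH d.+2) /C.
have [c|c] := boolP ((d.+1 <= k.+1)%N && ~~ odd (k.+1 - d.+1)).
  have [e|ne] := eqVneq d k.
    subst d.
    have -> : ((k.+2 <= k)%N && ~~ odd (k - k.+2)) = false by apply/negbTE; lia.
    rewrite !subnn /= LamS; ring.
  set J := ((k - d.+2)./2)%N.
  set B := ((k + d)./2)%N.
  try have -> : ((d <= k)%N && ~~ odd (k - d)) = true by lia.
  have -> : ((d.+2 <= k)%N && ~~ odd (k - d.+2)) = true by lia.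
  have -> : ((k.+1 - d.+1)./2 = J.+1)%N by lia.
  have -> : ((k.+1 + d.+1)./2 = B.+1)%N by lia.
  have -> : ((k + d.+2)./2 = B.+1)%N by lia.
  rewrite Tn_rec; last by lia.
  have -> : (B.+1 - J = d.+2)%N by lia.
  rewrite !LamS; ring.
try have -> : ((d <= k)%N && ~~ odd (k - d)) = false by apply/negbTE; lia.
have -> : ((d.+2 <= k)%N && ~~ odd (k - d.+2)) = false by apply/negbTE; lia.
by rewrite !mulr0 addr0.
Qed.

End Main.


Lemma path_rcons_le a s x : path leq a (rcons s x) =
  path leq a s && all (fun v => (v <= x)%N) (a :: s).
Proof.
elim: s a => [|b s IH] a /=; first by rewrite andbT.
rewrite IH /=; case ab: (a <= b)%N => //=.
case: (path leq b s) => //=; case bx: (b <= x)%N; rewrite /= ?andbF //.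
by rewrite (leq_trans ab bx).
Qed.

Lemma sorted_rcons_le s x : sorted leq (rcons s x) =
  sorted leq s && all (fun v => (v <= x)%N) s.
Proof. by case: s => [|a s] //=; rewrite path_rcons_le. Qed.

Lemma tnth_rcons' (T : Type) n (t : n.-tuple T) x (i : 'I_n.+1) :
  tnth [tuple of rcons t x] i =
  if (i < n)%N then nth x t i else x.
Proof.
rewrite (tnth_nth x) /= nth_rcons size_tuple.
case: ltnP => // _; by case: eqP.
Qed.

Lemma forall_rcons N n (t : n.-tuple 'I_N) x :
  [forall i : 'I_n.+1, (i < tnth [tuple of rcons t x] i)%N] =
  [forall i : 'I_n, (i < tnth t i)%N] && (n < x)%N.
Proof.
apply/forallP/andP.
  move=> H; split.
    apply/forallP => i; have := H (widen_ord (leqnSn n) i).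
    by rewrite tnth_rcons' /= ltn_ord (tnth_nth x).
  by have := H ord_max; rewrite tnth_rcons' /= ltnn.
case=> /forallP H hx i; rewrite tnth_rcons'.
case: ifP => hi.
  by have := H (Ordinal hi); rewrite (tnth_nth x).
have -> : (i : nat) = n by have := ltn_ord i; move: hi; lia.
exact: hx.
Qed.

Lemma prod_rcons (R : comPzRingType) (f : nat -> nat -> R) N n (t : n.-tuple 'I_N) x :
  \prod_(i < n.+1) f (tnth [tuple of rcons t x] i) i =
  (\prod_(i < n) f (tnth t i) i) * f x n.
Proof.
rewrite big_ord_recr /= tnth_rcons' /= ltnn; congr (_ * _).
by apply: eq_bigr => i _; rewrite tnth_rcons' /= ltn_ord (tnth_nth x).
Qed.

Section SB.
Variables (R : comPzRingType) (lam mu : nat -> R) (N : nat).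

Definition Sb n b := \sum_(m : n.-tuple 'I_N |
   sorted leq (map (@nat_of_ord N) m) && [forall i : 'I_n, (i < tnth m i)%N]
   && all (fun v => (v <= b)%N) (map (@nat_of_ord N) m))
  \prod_(i < n) (lam (tnth m i - i)%N * mu (tnth m i - i)%N).

Lemma Sb_Tn n b : (b < N)%N -> Sb n b = Tn lam mu n b.
Proof.
elim: n b => [|n IH] b bN.
  rewrite /Sb (eq_bigr (fun _ => 1)); last by move=> t _; rewrite big_ord0.
  rewrite (big_pred1 [tuple]) //= => t; rewrite (tuple0 t) /=.
  by rewrite andbT; apply/forallP => -[].
rewrite /Sb big_mkcond sum_tuple_rcons /=.
have E : forall x : 'I_N, \sum_(t : n.-tuple 'I_N)
   (if (sorted leq (map (@nat_of_ord N) [tuple of rcons t x])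
        && [forall i : 'I_n.+1, (i < tnth [tuple of rcons t x] i)%N])
       && all (fun v => (v <= b)%N) (map (@nat_of_ord N) [tuple of rcons t x])
    then \prod_(i < n.+1) (lam (tnth [tuple of rcons t x] i - i)%N *
                           mu (tnth [tuple of rcons t x] i - i)%N)
    else 0) =
  if (n < x)%N && (x <= b)%N then lam (x - n)%N * mu (x - n)%N * Tn lam mu n x else 0.
  move=> x.
  case: ifP => hx; last first.
    apply: big1 => t _; rewrite forall_rcons /= map_rcons all_rcons.
    move: hx; case: (n < x)%N; case: (x <= b)%N => //= _; by rewrite ?andbF.
  case/andP: hx => h1 h2.
  rewrite -IH; last by apply: leq_ltn_trans bN.
  rewrite /Sb mulr_sumr [RHS]big_mkcond /=; apply: eq_bigr => t _.
  rewrite forall_rcons /= map_rcons all_rcons sorted_rcons_le h1 h2 (prod_rcons (fun v i : nat => lam (v - i)%N * mu (v - i)%N)).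
  set s := map _ t.
  have Hb : all (leq^~ x) s -> all (leq^~ b) s.
    by apply: sub_all => v /= /leq_trans; apply.
  case: (sorted leq s); case: [forall i : 'I_n, (i < tnth t i)%N];
    case hx: (all (leq^~ x) s) => //=; rewrite ?andbF //.
  by rewrite (Hb hx) mulrC.
under eq_bigr => x _ do rewrite E.
rewrite -big_mkcond /=.
rewrite (big_nat_widen _ _ _ _ _ bN) big_geq_mkord.
by apply: eq_big => // x; rewrite andbC.
Qed.

End SB.


Unset Implicit Arguments.
Theorem mainTheorem5 (R : comPzRingType) (lam mu : nat -> R) (k delta : nat) :
  (delta <= k)%N -> ~~ odd (k - delta) ->
  let j := ((k - delta)./2)%N in
  let M := ((k + delta)./2)%N in
  \sum_(P : k.-tuple bool | in_D 0 delta P) path_wt lam mu 0 P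
  = (\prod_(1 <= i < delta.+1) lam i) *
    \sum_(m : j.-tuple 'I_M.+1 |
            sorted leq (map (@nat_of_ord M.+1) m) &&
            [forall i : 'I_j, (i < tnth m i)%N])
       \prod_(i < j) (lam (tnth m i - i)%N * mu (tnth m i - i)%N).
Proof.
move=> dk ev j M.
have := Psum_C lam mu k delta; rewrite /Psum => ->.
rewrite /C dk ev /=.
rewrite -(@Sb_Tn R lam mu M.+1 j M (ltnSn M)) /Sb /Lam.
congr (_ * _); apply: eq_bigl => m.
have -> : all (fun v => (v <= M)%N) (map (@nat_of_ord M.+1) m) = true.
  by apply/allP => v /mapP [y _ ->]; exact: leq_ord.
by rewrite andbT.
Qed.
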